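(* Let $i\in\{3\frac{1}{2},4,5\}$. Let $\mathscr{P}$ be a topological property which is closed hereditary, co-local, and preserved under finite closed sums. A locally connected $T_i$-space $X$ having $\mathscr{P}$ has a $T_i$ one-point connectification having $\mathscr{P}$ if and only if $X$ has no compact component.
   Context: Conventions: $T_{3\frac12}$ = completely regular and $T_1$; $T_4$ = normal and $T_1$; $T_5$ = hereditarily normal (every subspace normal) and $T_1$. A one-point connectification of a space $X$ is a connected space $Y$ which contains $X$ as a dense subspace and such that $Y\setminus X$ is a singleton. A topological property $\mathscr{P}$ is: closed hereditary if every closed subspace of a space with $\mathscr{P}$ has $\mathscr{P}$; preserved under finite closed sums if every space which is a finite union of closed subspaces each having $\mathscr{P}$ has $\mathscr{P}$; co-local if a space $X$ has $\mathscr{P}$ whenever there are a point $p\in X$ and an open base $\mathfrak{B}$ at $p$ such that $X\setminus B$ has $\mathscr{P}$ for every $B\in\mathfrak{B}$. *)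

(* Defs.v *)
From mathcomp Require Import all_boot all_classical all_reals all_analysis.

Set Implicit Arguments.
Unset Strict Implicit.
Unset Printing Implicit Defensive.

Local Open Scope classical_set_scope.

(* Subspaces are the library's [set_type A] (written [A] coerced to a Type),
   which carries the initial (= subspace) topology of the inclusion. *)

Definition homeomorphic (X Y : topologicalType) : Prop :=
  exists (f : X -> Y) (g : Y -> X),
    [/\ continuous f, continuous g, cancel f g & cancel g f].

Definition topological_property (P : topologicalType -> Prop) : Prop :=
  forall X Y : topologicalType, homeomorphic X Y -> P X -> P Y.

Definition closed_hereditary (P : topologicalType -> Prop) : Prop :=
  forall (X : topologicalType) (A : set X), P X -> closed A -> P (set_type A).

Definition finite_closed_sums (P : topologicalType -> Prop) : Prop :=
  forall (X : topologicalType) (S : set (set X)),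
    finite_set S ->
    (forall A, S A -> closed A /\ P (set_type A)) ->
    \bigcup_(A in S) A = setT -> P X.

Definition open_base_at (X : topologicalType) (p : X) (Bs : set (set X)) : Prop :=
  (forall B, Bs B -> open B /\ B p) /\
  (forall N, nbhs p N -> exists2 B, Bs B & B `<=` N).

Definition co_local (P : topologicalType -> Prop) : Prop :=
  forall X : topologicalType,
    (exists (p : X) (Bs : set (set X)),
        open_base_at p Bs /\ forall B, Bs B -> P (set_type (~` B))) ->
    P X.

Definition locally_connected (X : topologicalType) : Prop :=
  forall (x : X) (U : set X), nbhs x U ->
    exists V : set X, [/\ open V, V x, connected V & V `<=` U].

Inductive sep_index := T3half | T4 | T5.

Definition Ti (i : sep_index) (X : topologicalType) : Prop :=
  match i with
  | T3half => completely_regular_space X /\ accessible_space X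
  | T4 => normal_space X /\ accessible_space X
  | T5 => (forall A : set X, normal_space (set_type A)) /\ accessible_space X
  end.

Definition embedding (X Y : topologicalType) (f : X -> Y) : Prop :=
  [/\ injective f, continuous f &
      forall U : set X, open U -> exists2 V : set Y, open V & f @` U = range f `&` V].

Definition one_point_connectification (X Y : topologicalType) (f : X -> Y) : Prop :=
  [/\ embedding f, connected (@setT Y), dense (range f) &
      exists p : Y, ~` range f = [set p]].

(* Main.v *)
Require Import Defs.
From HB Require Import structures.
From mathcomp Require Import all_boot all_order all_algebra all_classical all_reals all_analysis.
From mathcomp Require Import lra Rstruct.
Import Order.TTheory GRing.Theory Num.Theory numFieldNormedType.Exports.
Local Open Scope classical_set_scope.
Local Open Scope ring_scope.

Section clamp.
Variable R : realType.
Definition clamp (r : R) : R := Num.min 1 (Num.max 0 r).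
Lemma clamp_cont : continuous clamp.
Proof.
move=> x.
have := @continuous_min R R (fun=> 1) (fun r => Num.max 0 r) x; apply.
  exact: cst_continuous.
have := @continuous_max R R (fun=> 0) id x; apply => //.
exact: cst_continuous.
Qed.

Ltac clampt r := rewrite /clamp maxEle minEle; case: (leP 0 r) => ?; [case: (leP 1 r) => ? | case: (leP (1:R) 0) => ?]; lra.
Lemma clamp01 r : 0 <= clamp r <= 1.
Proof. by apply/andP; split; clampt r. Qed.
Lemma clamp_lt r e : 0 < e -> r < e -> clamp r < e.
Proof. move=> *; clampt r. Qed.
Lemma clamp_1 r : 1 <= r -> clamp r = 1.
Proof. move=> *; clampt r. Qed.
Lemma clamp_gt r e : 0 < e -> 1 - e < r -> 1 - e < clamp r.
Proof. move=> *; clampt r. Qed.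
Lemma clamp_0 r : r <= 0 -> clamp r = 0.
Proof. move=> *; clampt r. Qed.
End clamp.
Arguments clamp {R}.
Arguments clamp_cont {R}.
Arguments clamp01 {R}.
Arguments clamp_lt {R}.
Arguments clamp_1 {R}.
Arguments clamp_gt {R}.
Arguments clamp_0 {R}.

Lemma sub_openE (Z : topologicalType) (S : set Z) (U : set (set_type S)) :
  open U <-> exists2 V : set Z, open V & (fun z : set_type S => V (val z)) = U.
Proof. split; by case=> V oV <-; exists V. Qed.

Definition relnormal {Z : topologicalType} (S : set Z) :=
  forall E G : set Z, E `<=` S -> G `<=` S -> closure E `&` S `<=` E ->
    closure G `&` S `<=` G -> E `&` G = set0 ->
  exists Q1 Q2 : set Z, [/\ open Q1, open Q2, E `<=` Q1, G `<=` Q2 & Q1 `&` Q2 `&` S = set0].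

Section RN.
Variable R : realType.
Variable Z : topologicalType.

Lemma sub_closed {S E : set Z} : E `<=` S -> closure E `&` S `<=` E ->
  closed (fun z : set_type S => E (val z)).
Proof.
move=> ES cE; rewrite -openC; apply/sub_openE.
exists (~` closure E); first exact/closed_openC/closed_closure.
apply/seteqP; split => z /=.
  by move=> ncz Ez; apply: ncz; apply: subset_closure.
by move=> nEz cz; apply: nEz; apply: cE; split => //; exact: set_valP.
Qed.

Lemma RN1 (S : set Z) : normal_space (set_type S) -> relnormal S.
Proof.
move=> /(@normal_openP R) nS E G ES GS cE cG EG.
have EG' : (fun z : set_type S => E (val z)) `&` (fun z : set_type S => G (val z)) = set0.
  by apply/seteqP; split => // z [/= Ez Gz]; have : (E `&` G) (val z) by []; rewrite EG.
have [U [V [oU oV EU GV UV]]] := nS _ _ (sub_closed ES cE) (sub_closed GS cG) EG'.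
case/sub_openE: oU => Q1 oQ1 Q1U; case/sub_openE: oV => Q2 oQ2 Q2V.
exists Q1, Q2; split => //.
- move=> x Ex; have Sx := ES _ Ex.
  have : U (exist _ x (mem_set Sx)) by apply: EU.
  by rewrite -Q1U.
- move=> x Gx; have Sx := GS _ Gx.
  have : V (exist _ x (mem_set Sx)) by apply: GV.
  by rewrite -Q2V.
- apply/seteqP; split => // x [ [a1 a2] Sx].
  have : (U `&` V) (exist _ x (mem_set Sx)) by rewrite -Q1U -Q2V.
  by rewrite UV.
Qed.

Lemma RN2 (S : set Z) : relnormal S -> normal_space (set_type S).
Proof.
move=> nS; apply/(@normal_openP R) => E' G' cE cG EG.
have cl (F' : set (set_type S)) : closed F' ->
    closure (val @` F') `&` S `<=` val @` F'.
  move=> cF x [clx Sx]; apply: contrapT => nF.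
  have : (~` F') (exist _ x (mem_set Sx)) by move=> Fx; apply: nF; exists (exist _ x (mem_set Sx)).
  have : open (~` F') by rewrite openC.
  move=> /sub_openE [W oW WF]; rewrite -WF /= => Wx.
  have : nbhs x W by apply: open_nbhs_nbhs.
  rewrite closureEnbhs in clx; move=> /(clx (val @` F')) [] // y [[z Fz <-] Wz].
  by have := WF; move=> /seteqP [+ _] => /(_ z Wz); apply.
have Es : val @` E' `<=` S by move=> _ [z _ <-]; exact: set_valP.
have Gs : val @` G' `<=` S by move=> _ [z _ <-]; exact: set_valP.
have EG0 : val @` E' `&` val @` G' = set0.
  apply/seteqP; split => // _ [[z Ez <-] [w Gw /val_inj wz]]; subst w.
  by have : (E' `&` G') z by []; rewrite EG.
have [Q1 [Q2 [oQ1 oQ2 EO GO OO]]] := nS _ _ Es Gs (cl _ cE) (cl _ cG) EG0.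
exists (fun z => Q1 (val z)), (fun z => Q2 (val z)); split.
- by apply/sub_openE; exists Q1.
- by apply/sub_openE; exists Q2.
- by move=> z Ez; apply: EO; exists z.
- by move=> z Gz; apply: GO; exists z.
- apply/seteqP; split => // z [/= a1 a2].
  have : (Q1 `&` Q2 `&` S) (val z) by split => //; exact: set_valP.
  by rewrite OO.
Qed.

Lemma closed_relT (E : set Z) : closed E <-> closure E `&` [set: Z] `<=` E.
Proof.
split; first by move=> cE x [+ _]; rewrite -(closure_id _).1.
move=> h; rewrite (closure_id E); apply/seteqP; split; first exact: subset_closure.
by move=> x cx; apply: h.
Qed.

Lemma normal_relT : normal_space Z -> relnormal [set: Z].
Proof.
move=> /(@normal_openP R) nZ E G _ _ /closed_relT cE /closed_relT cG EG.
have [U [V [oU oV EU GV UV]]] := nZ _ _ cE cG EG.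
by exists U, V; split => //; rewrite UV set0I.
Qed.

Lemma relT_normal : relnormal [set: Z] -> normal_space Z.
Proof.
move=> nZ; apply/(@normal_openP R) => E G cE cG EG.
have [U [V [oU oV EU GV UV]]] := nZ E G (fun _ _ => I) (fun _ _ => I)
  ((closed_relT _).1 cE) ((closed_relT _).1 cG) EG.
by exists U, V; split => //; rewrite -UV setIT.
Qed.
End RN.

Section gen.
Variable R : realType.
Variable T : topologicalType.
Lemma cr_fun : completely_regular_space T -> forall (x : T) (B : set T), closed B -> ~ B x ->
  exists f : T -> R, [/\ continuous f, (forall z, 0 <= f z <= 1), f x = 0 &
                      (forall z, B z -> f z = 1)].
Proof.
move=> crs x B cB nBx; have := crs x B cB nBx => /(@uniform_separatorP _ R).
case=> f [cf f01 fx fB]; exists f; split => //.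
- by move=> z; have := f01 (f z) (ex_intro2 _ _ z I erefl); rewrite /= in_itv.
- by apply: fx; exists x.
- by move=> z Bz; apply: fB; exists z.
Qed.

Lemma cr_of_fun : (forall (x : T) (B : set T), closed B -> ~ B x ->
  exists f : T -> R, [/\ continuous f, (forall z, 0 <= f z <= 1), f x = 0 &
                      (forall z, B z -> f z = 1)]) -> completely_regular_space T.
Proof.
move=> H x B cB nBx; apply/(@uniform_separatorP _ R).
have [f [cf f01 fx fB]] := H x B cB nBx; exists f; split => //.
- by move=> _ [z _ <-]; rewrite /= in_itv /=; exact: f01.
- by move=> _ [z -> <-].
- by move=> _ [z Bz <-]; rewrite /= fB.
Qed.

Lemma cr_hausdorff : completely_regular_space T -> accessible_space T -> hausdorff_space T.
Proof.
move=> crs acc; rewrite open_hausdorff => x y xy.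
have ny : ~ [set y] x by move=> /= E; rewrite E eqxx in xy.
have [f [cf f01 fx fy]] := cr_fun crs x [set y] (@accessible_closed_set1 T acc y) ny.
exists (f @^-1` [set r : R | r < 2^-1], f @^-1` [set r : R | 2^-1 < r]) => /=.
  by rewrite !inE /= fx (fy y erefl); split; lra.
split.
- by apply: open_comp; [move=> z _; exact: cf|exact: open_lt].
- by apply: open_comp; [move=> z _; exact: cf|exact: open_gt].
- by apply/eqP/seteqP; split => // z [/= a b]; lra.
Qed.

Lemma comp_open : locally_connected T -> forall x : T, open (connected_component [set: T] x).
Proof.
move=> lc x; rewrite openE => y Kxy.
have [V [oV Vy cV _]] := @lc y setT filterT.
have VK : V `<=` connected_component [set: T] y by apply: connected_component_max.
rewrite /interior (same_connected_component Kxy).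
by apply: (filterS VK); apply: open_nbhs_nbhs.
Qed.

Lemma Ti_cr i : Ti i T -> completely_regular_space T /\ accessible_space T.
Proof.
case: i => /=.
- by [].
- by move=> [nT aT]; split => //; exact: (@normal_completely_regular R).
- move=> [nT aT]; split => //; apply: (@normal_completely_regular R) => //.
  apply: (@relT_normal R); apply: (@RN1 R); exact: nT.
Qed.
End gen.

Section Conn.
Variable R : realType.
Variable X : topologicalType.
Hypothesis noncpt : forall x : X, ~ compact (connected_component [set: X] x).

Definition KK (x : X) := connected_component [set: X] x.

Definition FCprop (C : set X) (F : set (set X)) :=
  ProperFilter F /\ F C /\ forall y, ~ cluster F y.

Definition FC (C : set X) : set (set X) :=
  match pselect (exists F, FCprop C F) with
  | left e => proj1_sig (cid e)
  | right _ => set0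
  end.

Definition FF x := FC (KK x).

Lemma KK_closed x : closed (KK x).
Proof. exact/component_closed/closedT. Qed.

Lemma FF_spec x : ProperFilter (FF x) /\ FF x (KK x) /\ forall y, ~ cluster (FF x) y.
Proof.
suff : exists F, FCprop (KK x) F.
  rewrite /FF /FC; case: pselect => // e _; exact: (proj2_sig (cid e)).
have := noncpt x; rewrite /compact => /existsNP [F] /not_implyP [PF] /not_implyP [FK].
move=> /set0P /negP; rewrite negbK => /eqP K0.
exists F; split => //; split => // y Fy.
have : (KK x `&` cluster F) y; last by rewrite /KK K0.
split => //.
rewrite ((closure_id _).1 (KK_closed x)) closureEnbhs => B GB NB NGB.
by apply: Fy => //; apply: filterS FK.
Qed.

Definition HH : set (X -> R) :=
  [set h : X -> R | continuous h /\ forall x (e : R), 0 < e -> FF x [set y | h y < e]].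

Definition Y : Type := option X.
HB.instance Definition _ := Choice.on Y.
HB.instance Definition _ := Pointed.on Y.

Definition Bset (h : X -> R) : set Y := fun y => if y is Some x then h x < 1 else True.

Definition Ynbhs (y : Y) : set_system Y :=
  if y is Some x then Some @ nbhs x else filter_from HH Bset.

Lemma HH0 : HH (fun=> 0).
Proof.
split; first exact: cst_continuous.
move=> x e e0; have [PF _] := FF_spec x.
by apply: filterS (@filterT _ _ PF) => y _ /=.
Qed.

Lemma HHmax h1 h2 : HH h1 -> HH h2 -> HH (h1 \max h2).
Proof.
move=> [c1 f1] [c2 f2]; split; first exact: max_fun_continuous.
move=> x e e0; have [PF _] := FF_spec x.
apply: filterS (filterI (f1 x e e0) (f2 x e e0)) => y [/= a b].
by rewrite gt_max a b.
Qed.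

Lemma HH2 h : HH h -> HH (fun x => 2 * h x).
Proof.
move=> [c f]; split.
  move=> x; have := continuousM (@cst_continuous _ R 2 x) (c x); exact.
move=> x e e0; have [PF _] := FF_spec x.
have e20 : 0 < e / 2 by rewrite divr_gt0.
apply: filterS (f x _ e20) => y /= hy.
by rewrite -ltr_pdivlMl // mulrC.
Qed.


Lemma HH_nbhs {h} z : HH h -> h z < 1 -> nbhs z [set x | h x < 1].
Proof.
move=> [c _] hz; have : open (h @^-1` [set r : R | r < 1]).
  by apply: open_comp => [t _|]; [exact: c|exact: open_lt].
by rewrite openE => /(_ z hz).
Qed.

Let Y_filter (y : Y) : ProperFilter (Ynbhs y).
Proof.
case: y => [x|]; first exact: fmap_proper_filter.
apply: filter_from_proper; last by move=> ? _; exists None.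
apply: filter_from_filter; first by exists (fun=> 0); exact: HH0.
move=> h1 h2 H1 H2; exists (h1 \max h2); first exact: HHmax.
by case=> [x|//] /=; rewrite gt_max => /andP[].
Qed.

Let Y_singleton (y : Y) U : Ynbhs y U -> U y.
Proof. by case: y => [x /= /nbhs_singleton//|[h _]]; apply. Qed.

Let Y_nbhs_nbhs (p : Y) (A : set Y) : Ynbhs p A -> Ynbhs p (Ynbhs^~ A).
Proof.
case: p => [r /=|].
  rewrite nbhs_simpl nbhsE => -[U [oU Ur] USA/=].
  by exists U => //= z /=; rewrite nbhs_simpl nbhsE => Uz; exists U.
case=> h Hh hA /=; exists h => // -[z|_] /=; last by exists h.
move=> hz; rewrite nbhs_simpl.
by move: (HH_nbhs z Hh hz); apply: filterS => t ht; apply: hA.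
Qed.

HB.instance Definition _ := hasNbhs.Build Y Ynbhs.

HB.instance Definition _ := @Nbhs_isNbhsTopological.Build Y
  Y_filter Y_singleton Y_nbhs_nbhs.

Lemma nbhs_Some x (U : set Y) : nbhs (Some x : Y) U = nbhs x (Some @^-1` U).
Proof. by []. Qed.

Lemma nbhs_None (U : set Y) : nbhs (None : Y) U = exists2 h, HH h & Bset h `<=` U.
Proof. by []. Qed.

Lemma Y_openP (W : set Y) : open W <->
  ((forall x, W (Some x) -> nbhs x (Some @^-1` W)) /\
   (W None -> exists2 h, HH h & Bset h `<=` W)).
Proof.
rewrite openE; split.
  by move=> WW; split => [x /WW|/WW].
by move=> [WS WN] [x /WS|/WN].
Qed.

Lemma open_Some (U : set X) : open U -> open (Some @` U : set Y).
Proof.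
move=> oU; apply/Y_openP; split => [x [y Uy [<-]]|[] //].
rewrite openE in oU; apply: filterS (oU _ Uy) => z Uz; by exists z.
Qed.

Lemma Bset_open h : HH h -> open (Bset h).
Proof.
move=> Hh; apply/Y_openP; split => [x /= hx|_]; last by exists h.
exact: HH_nbhs.
Qed.

Lemma Some_continuous : continuous (Some : X -> Y).
Proof. by move=> x U. Qed.


Hypothesis Xlc : locally_connected X.
Hypothesis Xcrf : forall (x : X) (B : set X), closed B -> ~ B x ->
  exists f : X -> R, [/\ continuous f, (forall z, 0 <= f z <= 1), f x = 0 &
                      (forall z, B z -> f z = 1)].

Lemma KK_same {x y} : KK x y -> KK x = KK y.
Proof. exact: same_connected_component. Qed.

Lemma KK_refl x : KK x x.
Proof. exact: connected_component_refl. Qed.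

Lemma KK_open x : open (KK x).
Proof.
rewrite openE => y Kxy.
have [V [oV Vy cV _]] := @Xlc y setT filterT.
have VK : V `<=` KK y by apply: connected_component_max.
rewrite /interior (KK_same Kxy).
by apply: (filterS VK); apply: open_nbhs_nbhs.
Qed.

Lemma KK_disj x y : KK x = KK y \/ KK x `&` KK y = set0.
Proof.
have [[z [Kxz Kyz]]|/set0P/negP] := pselect (KK x `&` KK y !=set0).
  by left; rewrite (KK_same Kxz) (KK_same Kyz).
by rewrite negbK => /eqP; right.
Qed.

Lemma HH_meet {h} x : HH h -> exists y, KK x y /\ h y < 1.
Proof.
move=> [_ Hh]; have [PF [FK _]] := FF_spec x.
have : FF x (KK x `&` [set y | h y < 1]) by apply: filterI => //; exact: Hh.
by move=> /filter_ex [y [? ?]]; exists y.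
Qed.

Lemma HH_sep x0 : exists2 k, HH k & k x0 = 1.
Proof.
have [PF [FK Fnc]] := FF_spec x0.
have := Fnc x0; rewrite /cluster /meets /= => /existsNP [A] /existsNP [V].
move=> /not_implyP [FA] /not_implyP [NV] /set0P/negP; rewrite negbK => /eqP AV0.
have NW : nbhs x0 (V `&` KK x0).
  by apply: filterI NV _; apply: open_nbhs_nbhs; split; [exact: KK_open|exact: KK_refl].
have [f [cf f01 fx0 fB]] := Xcrf x0 _ (open_closedC (@open_interior _ (V `&` KK x0)))
  (fun H => H NW).
have Wsub : forall z, ~ (V `&` KK x0) z -> f z = 1.
  by move=> z nW; apply: fB => /interior_subset.
exists (fun z => 1 - f z); last by rewrite fx0 subr0.
split.
  move=> z; have := continuousB (@cst_continuous _ R 1 z) (cf z); exact.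
move=> y e e0; have [PFy _] := FF_spec y.
have key : ~` (V `&` KK x0) `<=` [set z | 1 - f z < e].
  by move=> z /Wsub /= ->; rewrite subrr.
case: (KK_disj y x0) => [Kyx|Kyx].
  rewrite /FF Kyx -/(FF x0); apply: filterS FA => z Az; apply: key => -[Vz _].
  by move: AV0; rewrite -subset0 => /(_ z) /=; apply.
have [_ [FKy _]] := FF_spec y.
apply: filterS FKy => z Kz; apply: key => -[_ K0z].
by move: Kyx; rewrite -subset0 => /(_ z) /=; apply.
Qed.


Lemma Some_embedding : embedding (Some : X -> Y).
Proof.
split; first by move=> a b [].
  exact: Some_continuous.
move=> U oU; exists (Some @` U); first exact: open_Some.
by rewrite setIidr // => _ [x _ <-]; exists x.
Qed.

Lemma None_closure x : closure (Some @` KK x : set Y) None.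
Proof.
rewrite closureEnbhs => B NB GB [h Hh hB]; have [y [Kxy hy]] := HH_meet x Hh.
by exists (Some y); split; [apply: GB; exists y|apply: hB].
Qed.

Lemma Y_connected (x0 : X) : connected [set: Y].
Proof.
have -> : [set: Y] = \bigcup_(x in [set: X]) closure (Some @` KK x : set Y).
  apply/seteqP; split => // -[y|] _.
    by exists y => //; apply: subset_closure; exists y => //; exact: KK_refl.
  by exists x0 => //; exact: None_closure.
apply: bigcup_connected.
  by exists None => x _; exact: None_closure.
move=> x _; apply: connected_closure; apply: connected_continuous_connected.
  exact: component_connected.
by apply: continuous_subspaceT; exact: Some_continuous.
Qed.

Lemma Y_dense (x0 : X) : dense (range (Some : X -> Y)).
Proof.
move=> O [[y|] Oy] oO.
  by exists (Some y); split => //; exists y.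
have : nbhs (None : Y) O by apply: open_nbhs_nbhs.
rewrite nbhs_None => -[h Hh hO]; have [y [_ hy]] := HH_meet x0 Hh.
by exists (Some y); split; [apply: hO|exists y].
Qed.

Lemma Y_compl : ~` range (Some : X -> Y) = [set None].
Proof.
apply/seteqP; split => [[y|] //= H|_ ->]; last by move=> [].
by exfalso; apply: H; exists y.
Qed.

Lemma Y_accessible : accessible_space X -> accessible_space Y.
Proof.
move=> acc [a|] [b|] neq.
- have ab : a != b by apply: contra neq => /eqP ->.
  have [A [oA aA bA]] := acc a b ab.
  exists (Some @` A); split; first exact: open_Some.
    by rewrite inE; exists a => //; rewrite -inE.
  by rewrite inE => -[z Az [zb]]; move: bA; rewrite inE; apply; rewrite -zb.
- exists (range Some); split.
  + by apply: open_Some; exact: openT.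
  + by rewrite inE; exists a.
  + by rewrite inE => -[].
- have [k Hk kb] := HH_sep b.
  exists (Bset k); split; first exact: Bset_open.
    by rewrite inE.
  by rewrite inE /= kb ltxx.
- by rewrite eqxx in neq.
Qed.


Lemma HHscale c h : 0 < c -> HH h -> HH (fun x => c * h x).
Proof.
move=> c0 [hc f]; split.
  move=> x; have := continuousM (@cst_continuous _ R c x) (hc x); exact.
move=> x e e0; have [PF _] := FF_spec x.
have ec0 : 0 < e / c by rewrite divr_gt0.
apply: filterS (f x _ ec0) => y /= hy.
by rewrite -ltr_pdivlMl // mulrC.
Qed.

Lemma cont_Y_Some (f : Y -> R) x :
  {for x, continuous (f \o Some)} -> {for Some x, continuous f}.
Proof. by []. Qed.

Lemma cont_Y_None (f : Y -> R) c : f None = c ->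
  (forall e, 0 < e -> exists2 h, HH h & forall x, h x < 1 -> `|c - f (Some x)| < e) ->
  {for None, continuous f}.
Proof.
move=> fc H U; rewrite fc => /nbhs_ballP [e e0 sub].
have [h Hh hP] := H e e0.
exists h => // -[x|] /= hx; apply: sub; rewrite /ball /=.
  exact: hP.
by rewrite fc subrr normr0.
Qed.


Lemma HH_inv {h e} : 0 < e -> HH h -> exists2 h', HH h' & forall x, h' x < 1 -> h x < e.
Proof.
move=> e0 Hh; exists (fun x => e^-1 * h x); first by apply: HHscale; rewrite ?invr_gt0.
by move=> x; rewrite ltr_pdivrMl // mulr1.
Qed.

Lemma Y_crf (a : Y) (B : set Y) : closed B -> ~ B a ->
  exists f : Y -> R, [/\ continuous f, (forall z, 0 <= f z <= 1), f a = 0 &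
                      forall z, B z -> f z = 1].
Proof.
move=> cB nBa; have oB : open (~` B) by rewrite openC.
have NB : nbhs a (~` B) by apply: open_nbhs_nbhs.
case: a nBa NB => [x0|] nBa NB.
- rewrite nbhs_Some in NB.
  have [g [cg g01 gx0 gB]] := Xcrf x0 _ (open_closedC (@open_interior _ (Some @^-1` ~` B)))
    (fun H => H NB).
  have [k Hk kx0] := HH_sep x0.
  exists (fun y => if y is Some x then Num.max (g x) (clamp (1 - k x)) else 1); split.
  + move=> [x|].
      apply: cont_Y_Some; apply: continuous_max; first exact: cg.
      apply: (@continuous_comp _ _ _ (fun x => 1 - k x) clamp); last exact: clamp_cont.
      have := continuousB (@cst_continuous _ R 1 x) (Hk.1 x); exact.
    apply: (@cont_Y_None _ 1) => // e e0.
    have [h Hh hk] := HH_inv e0 Hk; exists h => // x /hk kx.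
    have m1 : Num.max (g x) (clamp (1 - k x)) <= 1.
      by rewrite ge_max; have := g01 x; have := clamp01 (1 - k x); case/andP => _ -> /andP[_ ->].
    have m2 : 1 - e < Num.max (g x) (clamp (1 - k x)).
      rewrite lt_max; apply/orP; right; apply: clamp_gt => //; lra.
    rewrite ger0_norm; lra.
  + move=> [x|]; last by rewrite ler01 lexx.
    have := g01 x; have := clamp01 (1 - k x); case/andP => c0 c1 /andP[g0 g1].
    by rewrite le_max ge_max g0 g1 c1.
  + by rewrite gx0 kx0 subrr clamp_0 // maxxx.
  + move=> [x|//] Bx; rewrite gB; last by move=> /interior_subset /=; apply.
    by apply/max_idPl; have := clamp01 (1 - k x); case/andP.
- rewrite nbhs_None in NB; case: NB => h Hh hB.
  exists (fun y => if y is Some x then clamp (h x) else 0); split.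
  + move=> [x|].
      apply: cont_Y_Some.
      apply: (@continuous_comp _ _ _ h clamp); last exact: clamp_cont.
      exact: Hh.1.
    apply: (@cont_Y_None _ 0) => // e e0.
    have [h' Hh' hk] := HH_inv e0 Hh; exists h' => // x /hk hx.
    rewrite sub0r normrN ger0_norm; last by have := clamp01 (h x); case/andP.
    exact: clamp_lt.
  + by move=> [x|]; [exact: clamp01|rewrite lexx ler01].
  + by [].
  + move=> [x|/hB //] Bx; apply: clamp_1; rewrite leNgt; apply/negP => hx.
    by apply: (hB (Some x)).
Qed.


Lemma closure_Some {E : set Y} {x} : closure (Some @^-1` E) x -> closure E (Some x).
Proof.
rewrite !closureEnbhs => cx A B gA nB.
have [] := cx (Some @^-1` A) (Some @^-1` B) (fun z Ez => gA _ Ez) nB.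
by move=> z [Az Bz]; exists (Some z).
Qed.

Lemma None_notcl {G : set Y} : ~ closure G None ->
  exists2 h, HH h & forall x, h x < 1 -> ~ G (Some x).
Proof.
rewrite closureEnbhs /meets => /existsNP [A] /existsNP [B] /not_implyP [gA].
move=> /not_implyP [nB] /set0P/negP; rewrite negbK => /eqP AB0.
case: nB => h Hh hB; exists h => // x hx Gx.
have : (A `&` B) (Some x) by split; [exact: gA|exact: hB].
by rewrite AB0.
Qed.

Lemma Y_relnormal (S : set Y) :
  (forall T : set X, (T = Some @^-1` S \/ exists2 A, closed A & T = Some @^-1` S `|` A) ->
     relnormal T) -> relnormal S.
Proof.
move=> hT.
have [SN|nSN] := pselect (S None); last first.
  move=> E G ES GS cE cG EG.
  have nEN : ~ E None by move/ES.
  have nGN : ~ G None by move/GS.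
  have := hT _ (or_introl erefl) (Some @^-1` E) (Some @^-1` G).
  case => //.
  - by move=> x /ES.
  - by move=> x /GS.
  - by move=> x [/closure_Some cx Sx]; apply: cE.
  - by move=> x [/closure_Some cx Sx]; apply: cG.
  - apply/seteqP; split => // x [/= Ex Gx].
    by have : (E `&` G) (Some x) by []; rewrite EG.
  move=> Q1 [Q2 [oQ1 oQ2 EQ GQ QQ]].
  exists (Some @` Q1), (Some @` Q2); split; try exact: open_Some.
  - by move=> [x|//] Ex; exists x => //; apply: EQ.
  - by move=> [x|//] Gx; exists x => //; apply: GQ.
  - apply/seteqP; split => // _ [[[x Q1x <-] [z Q2z [zx]]] Sx]; subst z.
    by have : (Q1 `&` Q2 `&` Some @^-1` S) x by []; rewrite QQ.
move=> E G; wlog nGN : E G / ~ G None.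
  move=> wlg ES GS cE cG EG.
  have [GN|GN] := pselect (G None); last exact: wlg.
  have nEN : ~ E None by move=> EN; have : (E `&` G) None by []; rewrite EG.
  have [] := wlg G E nEN GS ES cG cE; first by rewrite setIC.
  move=> W1 [W2 [? ? ? ? WW]]; exists W2, W1; split => //.
  by rewrite (setIC W2).
move=> ES GS cE cG EG.
have ncl : ~ closure G None by move=> cl; apply: nGN; apply: cG.
have [h Hh hG] := None_notcl ncl.
pose A := h @^-1` [set r : R | r <= 2^-1].
have cA : closed A.
  apply: preimage_closed; last exact: closed_le.
  by move=> x _; exact: Hh.1.
have Ah x : A x -> h x < 1 by rewrite /A /= => hx; apply: (le_lt_trans hx); lra.
pose T := Some @^-1` S `|` A.
have := hT T (or_intror (ex_intro2 _ _ A cA erefl)) (Some @^-1` E `|` A) (Some @^-1` G).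
case.
- by move=> x [/ES|]; [left|right].
- by move=> x /GS; left.
- move=> x [cx Tx]; have [Ax|nAx] := pselect (A x); first by right.
  left; have Sx : S (Some x) by case: Tx.
  apply: cE; split => //; apply: closure_Some.
  rewrite closureEnbhs => B' B gB nB.
  have nA : nbhs x (~` A) by apply: open_nbhs_nbhs; split => //; exact: closed_openC.
  rewrite closureEnbhs in cx.
  have [z [[Ez|Az] [Bz nAz]]] := cx _ (B `&` ~` A) (fun _ H => H) (filterI nB nA).
    by exists z; split => //; apply: gB.
  by exfalso.
- move=> x [cx Tx]; apply: cG; split; first exact: closure_Some.
  case: Tx => // /Ah hx; exfalso.
  have : nbhs (Some x : Y) (Bset h) by apply: open_nbhs_nbhs; split => //; exact: Bset_open.
  move/(closure_Some cx) => [[z|] [Gz hz]] //.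
  exact: hG hz Gz.
- apply/seteqP; split => // x [[Ex|/Ah hx] Gx].
    by have : (E `&` G) (Some x) by []; rewrite EG.
  exact: hG hx Gx.
move=> Q1 [Q2 [oQ1 oQ2 EQ GQ QQ]].
exists (fun y => if y is Some x then Q1 x else True), (Some @` Q2); split.
- apply/Y_openP; split => [x Q1x|_].
    by apply: open_nbhs_nbhs.
  exists (fun x => 2 * h x); first exact: HH2.
  move=> [x|//] /= hx; apply: EQ; right; rewrite /A /=.
  lra.
- exact: open_Some.
- by move=> [x|//] Ex; apply: EQ; left.
- by move=> [x|//] Gx; exists x => //; apply: GQ.
- apply/seteqP; split => // y [[/= Q1y [x Q2x xy]] Sy]; subst y.
  have : (Q1 `&` Q2 `&` T) x by split => //; left.
  by rewrite QQ.
Qed.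


Section homeo.
Variable A : set X.
Let A' : set Y := Some @` A.

Definition phiS (z : set_type A) : set_type A' :=
  exist _ (Some (val z)) (mem_set (ex_intro2 _ _ (val z) (set_valP z) erefl)).

Definition psiS (w : set_type A') : set_type A :=
  let c := cid2 (set_valP w) in exist _ (sval c) (mem_set (svalP c).1).

Lemma psiSE w : Some (val (psiS w)) = val w.
Proof. by rewrite /psiS /=; case: cid2 => x /= ? ->. Qed.

Lemma homeo_Some : homeomorphic (set_type A) (set_type A').
Proof.
exists phiS, psiS; split.
- apply: continuous_comp_initial => z.
  have -> : set_val \o phiS = Some \o (@set_val X A) by [].
  apply: continuous_comp; last exact: Some_continuous.
  exact: initial_continuous.
- apply: continuous_comp_initial => w U /= nU.
  have nW : nbhs (set_val w : Y) (Some @` U).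
    rewrite set_valE -psiSE nbhs_Some; move: nU; apply: filterS => u Uu; by exists u.
  move: (@initial_continuous _ _ (@set_val Y A') w _ nW) => /=.
  change (nbhs w (set_val @^-1` (Some @` U)) -> nbhs w ((set_val \o psiS) @^-1` U)).
  apply: filterS => w' /= [u Uu uw].
  have := psiSE w'; rewrite -[val w']/(set_val w') -uw => -[E].
  by rewrite set_valE /= E.
- by move=> z; apply: val_inj; have := psiSE (phiS z) => -[].
- by move=> w; apply: val_inj; exact: psiSE.
Qed.
End homeo.

Lemma Y_P (P : topologicalType -> Prop) : topological_property P ->
  closed_hereditary P -> co_local P -> P X -> P Y.
Proof.
move=> tP chP clP PX; apply: clP.
exists None, [set B | exists2 h, HH h & Bset h = B]; split.
  split; first by move=> B [h Hh <-]; split => //; exact: Bset_open.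
  by move=> N [h Hh hN]; exists (Bset h) => //; exists h.
move=> B [h Hh <-].
pose A := [set x | ~ h x < 1].
have -> : ~` Bset h = Some @` A.
  apply/seteqP; split => [[x|] //= hx|_ [x Ax <-] //]; last by exists x.
have cA : closed A.
  have -> : A = ~` (h @^-1` [set r : R | r < 1]) by [].
  apply: open_closedC; apply: open_comp; last exact: open_lt.
  by move=> x _; exact: Hh.1.
have := tP _ _ (homeo_Some A) (chP _ _ PX cA); exact.
Qed.

Lemma Y_works i (P : topologicalType -> Prop) : topological_property P ->
  closed_hereditary P -> co_local P -> P X -> (exists x : X, True) -> Ti i X ->
  exists (Y : topologicalType) (f : X -> Y),
    [/\ one_point_connectification f, Ti i Y & P Y].
Proof.
move=> tP chP clP PX [x0 _] TiX.
have accX : accessible_space X by have [] := @Ti_cr R X i TiX.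
exists Y, Some; split.
- split.
  + exact: Some_embedding.
  + exact: Y_connected x0.
  + exact: Y_dense x0.
  + by exists None; exact: Y_compl.
- case: i TiX => /= TiX.
  + split; last exact: Y_accessible.
    by apply: (@cr_of_fun R) => a B cB nBa; exact: Y_crf.
  + case: TiX => nX _; split; last exact: Y_accessible.
    apply: (@relT_normal R); apply: Y_relnormal => T [->|[A _ ->]].
      exact: (@normal_relT R).
    by rewrite preimage_setT setTU; exact: (@normal_relT R).
  + case: TiX => nX _; split; last exact: Y_accessible.
    move=> S; apply: (@RN2 R); apply: Y_relnormal => T _.
    by apply: (@RN1 R); exact: nX.
- exact: Y_P.
Qed.

End Conn.


Lemma forward (R : realType) i (X Y : topologicalType) (f : X -> Y) :
  locally_connected X -> Ti i Y -> one_point_connectification f ->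
  forall x, ~ compact (connected_component [set: X] x).
Proof.
move=> lc TiY [[finj fc femb] conn dens [p hp]] x cpt.
have [crY accY] := @Ti_cr R Y i TiY.
have hY := @cr_hausdorff R Y crY accY.
set C := connected_component [set: X] x.
have cfC : compact (f @` C).
  by apply: continuous_compact => //; exact: continuous_subspaceT.
have clfC : closed (f @` C) by exact: compact_closed.
have [V oV fCV] := femb C (@comp_open X lc x).
have orf : open (range f).
  rewrite -[range f]setCK hp; apply: closed_openC.
  exact: accessible_closed_set1.
have ofC : open (f @` C) by rewrite fCV; exact: openI.
have : f @` C = [set: Y].
  apply: conn.
  - by exists (f x); exists x => //; exact: connected_component_refl.
  - by exists (f @` C) => //; rewrite setTI.
  - by exists (f @` C) => //; rewrite setTI.
have : (~` range f) p by rewrite hp.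
move=> nrp fCT; apply: nrp; have : (f @` C) p by rewrite fCT.
by case=> z _ <-; exists z.
Qed.

Local Close Scope ring_scope.

Theorem theorem2p5 (i : sep_index) (P : topologicalType -> Prop) :
  topological_property P -> closed_hereditary P -> co_local P ->
  finite_closed_sums P ->
  forall X : topologicalType,
    (exists x : X, True) ->
    locally_connected X -> Ti i X -> P X ->
    ((exists (Y : topologicalType) (f : X -> Y),
        [/\ one_point_connectification f, Ti i Y & P Y]) <->
     ~ (exists x : X, compact (connected_component setT x))).
Proof.
move=> tP chP clP _ X ex lc TiX PX; split.
  move=> [Y [f [opc TiY PY]]] [x cpt].
  exact: (@forward Rdefinitions.R i X Y f lc TiY opc x cpt).
move=> nc.
have noncpt : forall x : X, ~ compact (connected_component [set: X] x).
  by move=> x cx; apply: nc; exists x.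
apply: (@Y_works Rdefinitions.R X noncpt lc _ i P) => //.
exact: (@cr_fun Rdefinitions.R X (@Ti_cr Rdefinitions.R X i TiX).1).
Qed.
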